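(* Let $H$ be a Hopf algebra over a field $\mathbb{k}$ containing a subalgebra $P$ which is either a polynomial algebra $\mathbb{k}[x]$ or a Laurent polynomial algebra $\mathbb{k}[x^{\pm1}]$ in some element $x$, such that $H$ is finitely generated as a right $P$-module. Then a left ideal $I$ of $H$ has finite codimension in $H$ if and only if $I\cap P\ne0$. *)

(* Defs.v *)
From mathcomp Require Import all_boot all_order all_algebra.
Set Implicit Arguments. Unset Strict Implicit. Unset Printing Implicit Defensive.
Import Order.TTheory GRing.Theory Num.Theory.
Local Open Scope ring_scope.

Section Hopf.
Variables (k : fieldType) (H : algType k).

Definition lin_fun (f : H -> k) : Prop :=
  forall (a : k) (u v : H), f (a *: u + v) = a * f u + f v.
Definition lin_endo (f : H -> H) : Prop :=
  forall (a : k) (u v : H), f (a *: u + v) = a *: f u + f v.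

(* Elements of H (x) H are represented by finite sums sum_i a_i (x) b_i,
   i.e. by sequences of pairs.  Two representations denote the same tensor
   iff they agree under every f (x) g with f, g linear functionals (over a
   field, H (x) H embeds into the bilinear forms on pairs of functionals). *)
Definition tpair (f g : H -> k) (s : seq (H * H)) : k :=
  \sum_(p <- s) f p.1 * g p.2.
Definition teq (s t : seq (H * H)) : Prop :=
  forall f g, lin_fun f -> lin_fun g -> tpair f g s = tpair f g t.

Record is_hopf (Delta : H -> seq (H * H)) (eps : H -> k) (S : H -> H) : Prop := {
  hopf_Delta_lin : forall (a : k) (u v : H),
    teq (Delta (a *: u + v)) ([seq (a *: p.1, p.2) | p <- Delta u] ++ Delta v);
  hopf_Delta_mul : forall u v : H,
    teq (Delta (u * v)) [seq (p.1 * q.1, p.2 * q.2) | p <- Delta u, q <- Delta v];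
  hopf_Delta_one : teq (Delta 1) [:: (1, 1)];
  (* coassociativity (Delta (x) id) Delta = (id (x) Delta) Delta, tested on
     f (x) g (x) l for all linear functionals *)
  hopf_coassoc : forall (h : H) (f g l : H -> k),
    lin_fun f -> lin_fun g -> lin_fun l ->
    \sum_(p <- Delta h) tpair f g (Delta p.1) * l p.2
    = \sum_(p <- Delta h) f p.1 * tpair g l (Delta p.2);
  hopf_eps_lin : lin_fun eps;
  hopf_eps_mul : forall u v : H, eps (u * v) = eps u * eps v;
  hopf_eps_one : eps 1 = 1;
  hopf_counitl : forall h : H, \sum_(p <- Delta h) eps p.1 *: p.2 = h;
  hopf_counitr : forall h : H, \sum_(p <- Delta h) eps p.2 *: p.1 = h;
  hopf_S_lin : lin_endo S;
  hopf_antipodel : forall h : H, \sum_(p <- Delta h) S p.1 * p.2 = (eps h)%:A;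
  hopf_antipoder : forall h : H, \sum_(p <- Delta h) p.1 * S p.2 = (eps h)%:A
}.

Definition transcendental (x : H) : Prop :=
  forall p : {poly k}, horner_alg x p = 0 -> p = 0.

Definition is_poly_subalg (P : H -> Prop) (x : H) : Prop :=
  transcendental x /\ forall h, P h <-> exists p : {poly k}, h = horner_alg x p.

(* P is the Laurent polynomial subalgebra k[x, x^-1] (x invertible with
   inverse y, and k[t,t^-1] -> H injective, i.e. x transcendental) *)
Definition is_laurent_subalg (P : H -> Prop) (x : H) : Prop :=
  exists y : H, x * y = 1 /\ y * x = 1 /\ transcendental x /\
    forall h, P h <-> exists (p : {poly k}) (n : nat), h = horner_alg x p * y ^+ n.

Definition fg_right_module (P : H -> Prop) : Prop :=
  exists (n : nat) (g : 'I_n -> H), forall h : H,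
    exists c : 'I_n -> H, (forall i, P (c i)) /\ h = \sum_(i < n) g i * c i.

Definition left_ideal (I : H -> Prop) : Prop :=
  [/\ I 0, (forall u v, I u -> I v -> I (u + v)) & (forall h u, I u -> I (h * u))].

Definition finite_codim (I : H -> Prop) : Prop :=
  exists (m : nat) (v : 'I_m -> H), forall h : H,
    exists c : 'I_m -> k, I (h - \sum_(i < m) c i *: v i).

End Hopf.

(* Main.v *)
Require Import Defs.
From mathcomp Require Import all_boot all_order all_algebra.
Import Order.TTheory GRing.Theory Num.Theory.
Local Open Scope ring_scope.
Set Implicit Arguments. Unset Strict Implicit. Unset Printing Implicit Defensive.

Section Aux.
Variables (k : fieldType) (H : algType k) (I : H -> Prop).
Hypothesis hI : left_ideal I.

Lemma I0 : I 0. Proof. by case: hI. Qed.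
Lemma ID u v : I u -> I v -> I (u + v). Proof. by case: hI => _ ? _; auto. Qed.
Lemma IM h u : I u -> I (h * u). Proof. by case: hI => _ _ ?; auto. Qed.
Lemma IZ a u : I u -> I (a *: u). Proof. by rewrite -mulr_algl; apply: IM. Qed.
Lemma IB u v : I u -> I v -> I (u - v).
Proof. by move=> ? ?; apply: ID => //; rewrite -scaleN1r; apply: IZ. Qed.
Lemma Isum (T : Type) (r : seq T) (F : T -> H) :
  (forall i, I (F i)) -> I (\sum_(i <- r) F i).
Proof. by move=> hF; apply: big_ind => //; [exact: I0 | exact: ID]. Qed.

Fixpoint in_span (s : seq H) (h : H) : Prop :=
  if s is v :: s' then exists a : k, in_span s' (h - a *: v) else I h.

Lemma span_I s h : I h -> in_span s h.
Proof. by elim: s h => //= v s IH h Ih; exists 0; rewrite scale0r subr0; apply: IH. Qed.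

Lemma span_D s u v : in_span s u -> in_span s v -> in_span s (u + v).
Proof.
elim: s u v => [|w s IH] u v /=; first exact: ID.
move=> [a Ha] [b Hb]; exists (a + b).
by rewrite scalerDl opprD addrACA; apply: IH.
Qed.

Lemma span_catl s t h : in_span t h -> in_span (s ++ t) h.
Proof. by elim: s => //= v s IH Ht; exists 0; rewrite scale0r subr0; apply: IH. Qed.

Lemma span_catr s t h : in_span s h -> in_span (s ++ t) h.
Proof.
elim: s h => [|w s IH] h /=; first exact: span_I.
by move=> [a Ha]; exists a; apply: IH.
Qed.

Lemma span_sum (T : Type) (r : seq T) (S : T -> seq H) (F : T -> H) :
  (forall i, in_span (S i) (F i)) -> in_span (flatten (map S r)) (\sum_(i <- r) F i).
Proof.
move=> hS; elim: r => [|i r IH] /=; first by rewrite big_nil; exact: I0.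
by rewrite big_cons; apply: span_D; [apply: span_catr | apply: span_catl].
Qed.

Lemma span_lin (T : Type) (r : seq T) (F : T -> H) (c : T -> k) :
  in_span (map F r) (\sum_(i <- r) c i *: F i).
Proof.
elim: r => [|i r IH] /=; first by rewrite big_nil; exact: I0.
by rewrite big_cons; exists (c i); rewrite [c i *: F i + _]addrC addrK.
Qed.

Lemma span_fin s h : in_span s h ->
  exists c : 'I_(size s) -> k, I (h - \sum_(i < size s) c i *: s`_i).
Proof.
elim: s h => [|v s IH] h /=.
  by move=> Ih; exists (fun _ => 0); rewrite big_ord0 subr0.
move=> [a Ha]; have [c Hc] := IH _ Ha.
exists (fun i : 'I_(size s).+1 => if unlift ord0 i is Some j then c j else a).
rewrite big_ord_recl /= unlift_none.
under eq_bigr => i _ do rewrite liftK.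
rewrite opprD addrA; under eq_bigr => i _ do rewrite add0n. exact: Hc.
Qed.

Lemma span_codim s : (forall h, in_span s h) -> finite_codim I.
Proof.
move=> hs; exists (size s), (fun i => s`_i) => h.
exact: span_fin.
Qed.

Lemma horner_sum (x : H) (r : {poly k}) n : (size r <= n)%N ->
  horner_alg x r = \sum_(i < n) r`_i *: x ^+ i.
Proof.
move=> hs; have Er : r = \poly_(i < n) r`_i.
  apply/polyP => i; rewrite coef_poly; case: ltnP => // hi.
  by rewrite nth_default // (leq_trans hs hi).
rewrite {1}Er poly_def linear_sum /=; apply: eq_bigr => i _.
by rewrite linearZ /= rmorphXn /= horner_algX mulr_algl.
Qed.

Lemma poly_part (x g : H) (q : {poly k}) (hq : q != 0) (Iq : I (horner_alg x q)) r :
  in_span (map (fun j => g * x ^+ j) (iota 0 (size q))) (g * horner_alg x r).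
Proof.
rewrite (divp_eq r q) rmorphD rmorphM /= mulrDr mulrA.
apply: span_D; first by apply: span_I; apply: IM.
rewrite (@horner_sum _ _ (size q)); last exact/ltnW/ltn_modpN0.
rewrite mulr_sumr -(big_mkord xpredT (fun i => g * ((r %% q)`_i *: x ^+ i))).
rewrite /index_iota subn0.
under eq_bigr => i _ do rewrite -scalerAr.
exact: span_lin.
Qed.

Lemma fg_span (P : H -> Prop) n (g : 'I_n -> H)
  (hg : forall h, exists c : 'I_n -> H, (forall i, P (c i)) /\ h = \sum_(i < n) g i * c i)
  (S : H -> seq H) (hS : forall g' c, P c -> in_span (S g') (g' * c)) :
  finite_codim I.
Proof.
apply: (@span_codim (flatten (map (fun i => S (g i)) (index_enum 'I_n)))) => h.
have [c [Pc ->]] := hg h.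
by apply: span_sum => i; apply: hS.
Qed.

End Aux.
Section Laurent.
Variables (k : fieldType) (H : algType k) (I : H -> Prop).
Hypothesis hI : left_ideal I.
Variables (x y : H) (hxy : x * y = 1) (hyx : y * x = 1).

Lemma comm_xy : GRing.comm x y. Proof. by rewrite /GRing.comm hxy hyx. Qed.

Lemma comm_poly_y p : GRing.comm y (horner_alg x p).
Proof.
rewrite /GRing.comm (@horner_sum _ _ x p (size p) (leqnn _)) mulr_sumr mulr_suml.
apply: eq_bigr => i _; rewrite -scalerAr -scalerAl.
by rewrite (commrX i (commr_sym comm_xy)).
Qed.

Lemma reduce_X q : q != 0 -> I (horner_alg x q) ->
  exists q1 : {poly k}, q1`_0 != 0 /\ I (horner_alg x q1).
Proof.
have: forall N (q : {poly k}), (size q <= N)%N -> q != 0 -> I (horner_alg x q) ->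
  exists q1 : {poly k}, q1`_0 != 0 /\ I (horner_alg x q1); last by move=> /(_ _ q (leqnn _)).
elim=> [|N IHN] {}q hs hq Iq.
  by move: hs; rewrite leqn0 size_poly_eq0 (negbTE hq).
case: (eqVneq q`_0 0) => h0; last by exists q.
have hd : 'X %| q.
  by have := dvdp_XsubCl q 0; rewrite polyC0 subr0 => ->; rewrite /root horner_coef0 h0.
set q' := q %/ 'X.
have Eq : q = q' * 'X by rewrite divpK.
have hq' : q' != 0 by apply: contraNneq hq => e; rewrite Eq e mul0r.
apply: (IHN q') => //.
  by move: hs; rewrite Eq size_mulX.
have -> : horner_alg x q' = y * horner_alg x q.
  by rewrite Eq rmorphM /= horner_algX mulrA (comm_poly_y q') -mulrA hyx mulr1.
exact: IM.
Qed.

Lemma y_decomp (q1 : {poly k}) : q1`_0 != 0 ->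
  exists (u : {poly k}) (w : H), y = horner_alg x u + w * horner_alg x q1.
Proof.
move=> h0; set c0 := q1`_0; set t := (q1 - c0%:P) %/ 'X.
have Et : q1 = t * 'X + c0%:P.
  have hd : 'X %| q1 - c0%:P.
    have := dvdp_XsubCl (q1 - c0%:P) 0; rewrite polyC0 subr0 => ->.
    by rewrite /root horner_coef0 coefB coefC subrr.
  by rewrite divpK // subrK.
exists (- (c0^-1 *: t)), (c0^-1 *: y).
rewrite Et rmorphD rmorphM /= horner_algX horner_algC rmorphN /= -mul_polyC rmorphM /= horner_algC mulr_algl.
rewrite -scalerAl mulrDr mulrA (comm_poly_y t) -mulrA hyx mulr1 mulr_algr.
by rewrite scalerDr scalerA mulVf // scale1r addKr.
Qed.

Lemma laurent_part g (q1 : {poly k}) (hq1 : q1`_0 != 0) (Iq : I (horner_alg x q1)) r n :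
  in_span I (map (fun j => g * x ^+ j) (iota 0 (size q1))) (g * (horner_alg x r * y ^+ n)).
Proof.
have [u [w Ey]] := y_decomp hq1.
have hq1' : q1 != 0 by apply: contraNneq hq1 => ->; rewrite coef0.
elim: n r => [|n IH] r.
  by rewrite expr0 mulr1; apply: poly_part.
have -> : horner_alg x r * y ^+ n.+1 =
    horner_alg x (r * u) * y ^+ n + (horner_alg x r * y ^+ n * w) * horner_alg x q1.
  transitivity (horner_alg x r * (y ^+ n * (horner_alg x u + w * horner_alg x q1))).
    by rewrite -Ey exprSr.
  rewrite mulrDr mulrDr -(commrX n (commr_sym (comm_poly_y u))).
  by rewrite rmorphM /= !mulrA.
rewrite mulrDr; apply: span_D => //.
by apply: span_I => //; rewrite mulrA; apply: IM.
Qed.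

End Laurent.

Theorem lemma2p7 (k : fieldType) (H : algType k)
  (Delta : H -> seq (H * H)) (eps : H -> k) (S : H -> H)
  (hopf : is_hopf Delta eps S)
  (P : H -> Prop) (x : H)
  (hP : is_poly_subalg P x \/ is_laurent_subalg P x)
  (hfg : fg_right_module P)
  (I : H -> Prop) (hI : left_ideal I) :
  finite_codim I <-> exists h : H, I h /\ P h /\ h != 0.
Proof.
split.
- move=> [m [v hv]].
  have /fin_all_exists [C hC] : forall j : 'I_m.+1, exists c : 'I_m -> k,
      I (x ^+ j - \sum_(i < m) c i *: v i) by move=> j; exact: hv.
  pose A := \matrix_(j < m.+1, i < m) C j i.
  have : kermx A != 0.
    rewrite kermx_eq0 /row_free; apply/negP => /eqP hr.
    by have := rank_leq_col A; rewrite hr ltnn.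
  case/rowV0Pn => lam /sub_kermxP hz lam0.
  pose q := \poly_(j < m.+1) lam 0 (inord j).
  have qnz : q != 0.
    apply: contraNneq lam0 => hq; apply/eqP/matrixP => i0 j; rewrite (ord1 i0).
    by have := congr1 (fun p : {poly k} => p`_j) hq; rewrite coef_poly ltn_ord inord_val coef0 !mxE => ->.
  exists (horner_alg x q); split; [|split].
  + have E : \sum_(j < m.+1) lam 0 j *: (x ^+ j - \sum_(i < m) C j i *: v i) = horner_alg x q.
      rewrite (horner_sum x (size_poly _ _)).
      under eq_bigr => j _ do rewrite scalerBr.
      rewrite sumrB.
      have -> : \sum_(j < m.+1) lam 0 j *: \sum_(i < m) C j i *: v i = 0.
        under eq_bigr => j _ do rewrite scaler_sumr.
        rewrite exchange_big /=; apply: big1 => i _.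
        under eq_bigr => j _ do rewrite scalerA.
        rewrite -scaler_suml.
        have -> : \sum_(j < m.+1) lam 0 j * C j i = (lam *m A) 0 i.
          by rewrite mxE; apply: eq_bigr => j _; rewrite mxE.
        by rewrite hz mxE scale0r.
      by rewrite subr0; apply: eq_bigr => j _; rewrite coef_poly ltn_ord inord_val.
    by rewrite -E; apply: Isum => // j; apply: IZ.
  + case: hP => [[_ hPx]|[y [_ [_ [_ hPx]]]]]; apply/hPx; first by exists q.
    by exists q, 0%N; rewrite expr0 mulr1.
  + have tr : transcendental x by case: hP => [[tr _]|[y [_ [_ [tr _]]]]].
    by apply/eqP => e; move: qnz; rewrite (tr _ e) eqxx.
- move=> [h [Ih [Ph hnz]]]; case: hfg => n [g hg]; case: hP.
  + move=> [tr hPx]; have [q Eh] := (hPx h).1 Ph.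
    have qnz : q != 0 by apply: contraNneq hnz => e; rewrite Eh e rmorph0.
    apply: (@fg_span _ _ I hI P n g hg (fun g' => map (fun j => g' * x ^+ j) (iota 0 (size q)))).
    move=> g' c /hPx [r ->]; apply: poly_part => //; by rewrite -Eh.
  + move=> [y [hxy [hyx [tr hPx]]]]; have [q0 [n0 Eh]] := (hPx h).1 Ph.
    have q0nz : q0 != 0 by apply: contraNneq hnz => e; rewrite Eh e rmorph0 mul0r.
    have Iq0 : I (horner_alg x q0).
      have := IM hI (x ^+ n0) Ih.
      have -> : x ^+ n0 = horner_alg x ('X ^+ n0) by rewrite rmorphXn /= horner_algX.
      rewrite Eh mulrA -rmorphM mulrC rmorphM /= -mulrA rmorphXn /= horner_algX.
      by rewrite -(exprMn_comm n0 (comm_xy hxy hyx)) hxy expr1n mulr1.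
    have [q1 [h10 Iq1]] := reduce_X hI hxy hyx q0nz Iq0.
    apply: (@fg_span _ _ I hI P n g hg (fun g' => map (fun j => g' * x ^+ j) (iota 0 (size q1)))).
    move=> g' c /hPx [r [n' ->]]; exact: laurent_part.
Qed.
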